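(* Consider a discounted Markov decision process with Borel state space $\mathcal{S}$, action sets $\mathcal{A}(s)$ for $s\in\mathcal{S}$, transition kernel $P(\cdot\mid \alpha,s)$, bounded reward function $r(\alpha,s)$, and discount factor $\beta\in(0,1)$. Fix $\tau\in(0,1)$ and a stationary policy $\pi(\cdot\mid s)$ (a probability distribution over $\mathcal{A}(s)$ for each $s$). For bounded $V:\mathcal{S}\to\mathbb{R}$ define $$(\mathcal{T}^{\tau}_{\pi}V)(s)=Q_{\tau}\big[r(\alpha,s)+\beta V(s')\,\big|\,s\big],\quad \alpha\sim\pi(\cdot\mid s),\ s'\sim P(\cdot\mid\alpha,s),$$ $$(\mathcal{T}^{\tau}_{*}V)(s)=\max_{\alpha\in\mathcal{A}(s)} Q_{\tau}\big[r(\alpha,s)+\beta V(s')\,\big|\,s\big],\quad s'\sim P(\cdot\mid\alpha,s).$$ Then for all bounded $V,W:\mathcal{S}\to\mathbb{R}$, $$\|\mathcal{T}^{\tau}_{\pi}V-\mathcal{T}^{\tau}_{\pi}W\|_\infty\le\beta\|V-W\|_\infty,\qquad \|\mathcal{T}^{\tau}_{*}V-\mathcal{T}^{\tau}_{*}W\|_\infty\le\beta\|V-W\|_\infty.$$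
   Context: For a real random variable $Z$ with CDF $F_Z$, $Q_\tau[Z]=\inf\{x\in\mathbb{R}: F_Z(x)\ge\tau\}$; $Q_\tau[\,\cdot\mid s]$ denotes the $\tau$-quantile of the conditional law given the current state $s$ (for $\mathcal{T}^\tau_\pi$ the randomness is over both the action $\alpha\sim\pi(\cdot\mid s)$ and the next state $s'$; for $\mathcal{T}^\tau_*$ the action $\alpha$ is fixed and only $s'$ is random). The operators are taken to be well defined on bounded (measurable) functions, with the maximum over $\mathcal{A}(s)$ attained. $\|f\|_\infty=\sup_{s\in\mathcal{S}}|f(s)|$. *)

(* Defs.v *)
From HB Require Import structures.
From mathcomp Require Import all_boot all_order all_algebra.
From mathcomp Require Import all_classical all_reals all_analysis.
Set Implicit Arguments. Unset Strict Implicit. Unset Printing Implicit Defensive.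
Import Order.TTheory GRing.Theory Num.Theory.
Import numFieldNormedType.Exports.
Local Open Scope classical_set_scope.
Local Open Scope ring_scope.

Section QuantileMDP.
Context {d d' : measure_display} {S : measurableType d} {A : measurableType d'}
  {R : realType}.

Definition quantile (F : R -> \bar R) (tau : R) : R :=
  inf [set x : R | (tau%:E <= F x)%E].

(* CDF of r(a,s) + beta V(s'), a ~ pi(.|s), s' ~ P(.|a,s). *)
Definition cdf_pi (P : R.-pker (A * S) ~> S) (r : A * S -> R) (beta : R)
  (pi : S -> probability A R) (V : S -> R) (s : S) (x : R) : \bar R :=
  (\int[pi s]_a P (a, s) [set s' | (r (a, s) + beta * V s' <= x)%R])%E.

Definition cdf_act (P : R.-pker (A * S) ~> S) (r : A * S -> R) (beta : R)
  (V : S -> R) (s : S) (a : A) (x : R) : \bar R :=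
  P (a, s) [set s' | (r (a, s) + beta * V s' <= x)%R].

Definition T_pi P r beta pi tau (V : S -> R) : S -> R :=
  fun s => quantile (cdf_pi P r beta pi V s) tau.

Definition Q_act P r beta tau (V : S -> R) (s : S) (a : A) : R :=
  quantile (cdf_act P r beta V s a) tau.

(* max over A(s), realised as a supremum (the maximum is assumed attained). *)
Definition T_star P r beta (As : S -> set A) tau (V : S -> R) : S -> R :=
  fun s => sup [set Q_act P r beta tau V s a | a in As s].


Definition supnorm (f : S -> R) : R := sup (range (fun s => `|f s|)).

End QuantileMDP.

(* Main.v *)
Require Import Defs.
From HB Require Import structures.
From mathcomp Require Import all_boot all_order all_algebra.
From mathcomp Require Import all_classical all_reals all_analysis.
From mathcomp Require Import lra.
Import Order.TTheory GRing.Theory Num.Theory.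
Import numFieldNormedType.Exports.
Local Open Scope classical_set_scope.
Local Open Scope ring_scope.

Lemma bnd_of (T : Type) (R : realType) (f : T -> R) :
  bounded_fun f -> exists B, forall x, `|f x| <= B.
Proof.
move=> [M0 [_ HM]]; exists (M0 + 1) => x.
by apply: (HM (M0 + 1)) => //; rewrite ltrDl.
Qed.

Lemma le_integral_nm d (T : measurableType d) (R : realType)
  (mu : {measure set T -> \bar R}) (f g : T -> \bar R) :
  (forall x, (0 <= f x)%E) -> (forall x, (f x <= g x)%E) ->
  (\int[mu]_x f x <= \int[mu]_x g x)%E.
Proof.
move=> f0 fg; have g0 x : (0 <= g x)%E by apply: le_trans (f0 x) (fg x).
rewrite !ge0_integralTE//; apply: le_ereal_sup => _ [h hf <-].
by exists h => //= x; apply: le_trans (hf x) (fg x).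
Qed.

Lemma quantile_le (R : realType) (F G : R -> \bar R) (tau k : R) :
  (exists x1, forall x, (tau%:E <= F x)%E -> (x1 <= x)%R) ->
  (exists x, (tau%:E <= G x)%E) ->
  (forall x, (G x <= F (x + k)%R)%E) -> quantile F tau <= quantile G tau + k.
Proof.
move=> [x1 hx1] [x0 hx0] GF; rewrite -lerBlDr; apply: lb_le_inf.
  by exists x0.
move=> y /= hy; rewrite lerBlDr; apply: ge_inf.
  by exists x1 => z /hx1.
by rewrite /=; apply: le_trans hy (GF y).
Qed.

Section S.
Context (d d' : measure_display) (S : measurableType d)
  (A : measurableType d') (R : realType)
  (P : R.-pker (A * S) ~> S) (r : A * S -> R) (beta : R).

Lemma mset (V : S -> R) (mV : measurable_fun setT V) (c y : R) :
  measurable [set s' | c + beta * V s' <= y].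
Proof.
have mf : measurable_fun setT (fun s' => c + beta * V s').
  by apply: measurable_realfun.measurable_funD => //; apply: measurable_realfun.measurable_funM.
have := mf measurableT _ (measurable_itv `]-oo, y]).
rewrite setTI; congr measurable; apply/seteqP; split => z /=;
  by rewrite in_itv /=.
Qed.

Lemma cdf_act_low (V : S -> R) M BV s a x :
  0 < beta -> (forall z, `|r z| <= M) -> (forall z, `|V z| <= BV) ->
  x < - (M + beta * BV) -> cdf_act P r beta V s a x = 0%E.
Proof.
move=> b0 hM hV hx; rewrite /cdf_act.
suff -> : [set s' | r (a, s) + beta * V s' <= x] = set0 by rewrite measure0.
apply/seteqP; split => // z /=; apply/negP; rewrite -ltNge; apply: lt_le_trans hx _.
have := hM (a, s); have := hV z; rewrite !ler_norml => /andP[h1 _] /andP[h2 _].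
rewrite opprD lerD //; rewrite -mulrN ler_wpM2l //; exact: ltW.
Qed.

Lemma cdf_act_top (V : S -> R) M BV s a :
  0 < beta -> (forall z, `|r z| <= M) -> (forall z, `|V z| <= BV) ->
  cdf_act P r beta V s a (M + beta * BV) = 1%E.
Proof.
move=> b0 hM hV; rewrite /cdf_act.
suff -> : [set s' | r (a, s) + beta * V s' <= M + beta * BV] = setT by rewrite prob_kernel.
apply/seteqP; split => // z _ /=.
have := hM (a, s); have := hV z; rewrite !ler_norml => /andP[_ h1] /andP[_ h2].
rewrite lerD // ler_wpM2l //; exact: ltW.
Qed.

Lemma cdf_act_shift (V W : S -> R) c s a x :
  0 < beta -> measurable_fun setT V -> measurable_fun setT W ->
  (forall z, V z <= W z + c) ->
  (cdf_act P r beta W s a x <= cdf_act P r beta V s a (x + beta * c))%E.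
Proof.
move=> b0 mV mW hVW; rewrite /cdf_act; apply: le_measure; rewrite ?inE; try exact: mset.
move=> z /= hz; apply: (@le_trans _ _ (r (a, s) + beta * (W z + c))).
  by rewrite lerD2l ler_wpM2l // ltW.
by rewrite mulrDr addrA lerD2r.
Qed.

Lemma cdf_act_lb (V : S -> R) M BV s a x tau :
  0 < beta -> 0 < tau -> (forall z, `|r z| <= M) -> (forall z, `|V z| <= BV) ->
  (tau%:E <= cdf_act P r beta V s a x)%E -> - (M + beta * BV) <= x.
Proof.
move=> b0 t0 hM hV; apply: contraTT; rewrite -ltNge => hx.
by rewrite (cdf_act_low _ _ _ _ _ _ b0 hM hV hx) // -ltNge lte_fin.
Qed.

Lemma cdf_pi_lb (pi : S -> probability A R) (V : S -> R) M BV s x tau :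
  0 < beta -> 0 < tau -> (forall z, `|r z| <= M) -> (forall z, `|V z| <= BV) ->
  (tau%:E <= cdf_pi P r beta pi V s x)%E -> - (M + beta * BV) <= x.
Proof.
move=> b0 t0 hM hV; apply: contraTT; rewrite -ltNge => hx.
rewrite /cdf_pi (eq_integral (cst 0%E)); last first.
  by move=> a _; exact: (cdf_act_low _ _ _ _ _ _ b0 hM hV hx).
by rewrite integral0 -ltNge lte_fin.
Qed.

Lemma cdf_pi_top (pi : S -> probability A R) (V : S -> R) M BV s :
  0 < beta -> (forall z, `|r z| <= M) -> (forall z, `|V z| <= BV) ->
  cdf_pi P r beta pi V s (M + beta * BV) = 1%E.
Proof.
move=> b0 hM hV; rewrite /cdf_pi (eq_integral (cst 1%E)); last first.
  by move=> a _; exact: (cdf_act_top _ _ _ _ _ b0 hM hV).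
by rewrite integral_cst // mul1e; exact: probability_setT.
Qed.

Lemma cdf_pi_shift (pi : S -> probability A R) (V W : S -> R) c s x :
  0 < beta -> measurable_fun setT V -> measurable_fun setT W ->
  (forall z, V z <= W z + c) ->
  (cdf_pi P r beta pi W s x <= cdf_pi P r beta pi V s (x + beta * c))%E.
Proof.
move=> b0 mV mW hVW; apply: le_integral_nm => a; first exact: measure_ge0.
exact: (cdf_act_shift _ _ _ _ _ _ b0 mV mW hVW).
Qed.
End S.
Arguments cdf_act_low {d d' S A R P r beta V M BV s a x}.
Arguments cdf_act_top {d d' S A R P r beta V M BV s a}.
Arguments cdf_act_shift {d d' S A R P r beta V W c s a x}.
Arguments cdf_act_lb {d d' S A R P r beta V M BV s a x tau}.
Arguments cdf_pi_lb {d d' S A R P r beta pi V M BV s x tau}.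
Arguments cdf_pi_top {d d' S A R P r beta pi V M BV s}.
Arguments cdf_pi_shift {d d' S A R P r beta pi V W c s x}.

Lemma range_empty (T : Type) (R : realType) (f : T -> R) :
  ~ (exists s : T, True) -> range f = set0.
Proof. by move=> nT; apply/seteqP; split => // x [s _ _]; apply: nT; exists s. Qed.

Lemma sup_range_le (T : Type) (R : realType) (f : T -> R) k :
  (exists s : T, True) -> (forall s, f s <= k) -> sup (range f) <= k.
Proof.
move=> [s0 _] hk; apply: ge_sup; first by exists (f s0), s0.
by move=> _ [s _ <-]; exact: hk.
Qed.

Lemma sup_attained (T : Type) (R : realType) (D : set T) (Q : T -> R) a :
  D a -> (forall b, D b -> Q b <= Q a) -> sup [set Q b | b in D] = Q a.
Proof.
move=> Da hQ; apply/eqP; rewrite eq_le; apply/andP; split.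
  by apply: ge_sup; [exists (Q a), a | move=> _ [b hb <-]; exact: hQ].
apply: ub_le_sup; last by exists a.
by exists (Q a) => _ [b hb <-]; exact: hQ.
Qed.

Theorem theorem2 (d d' : measure_display) (S : measurableType d)
  (A : measurableType d') (R : realType)
  (As : S -> set A) (P : R.-pker (A * S) ~> S) (r : A * S -> R)
  (beta tau : R) (pi : S -> probability A R) :
  measurable_fun setT r ->
  (exists M : R, forall x, `|r x| <= M) ->
  0 < beta < 1 ->
  0 < tau < 1 ->
  (forall s, measurable (As s)) ->
  (forall s, pi s (As s) = 1%E) ->
  (* standing assumption: the maximum over A(s) is attained *)
  (forall (V : S -> R), measurable_fun setT V -> bounded_fun V ->
     forall s, exists2 a, As s a &
       forall b, As s b -> Q_act P r beta tau V s b <= Q_act P r beta tau V s a) ->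
  forall V W : S -> R,
    measurable_fun setT V -> bounded_fun V ->
    measurable_fun setT W -> bounded_fun W ->
    supnorm (T_pi P r beta pi tau V \- T_pi P r beta pi tau W)
      <= beta * supnorm (V \- W)
    /\
    supnorm (T_star P r beta As tau V \- T_star P r beta As tau W)
      <= beta * supnorm (V \- W).
Proof.
move=> mr [M hM] /andP[b0 b1] /andP[t0 t1] mAs hpi hmax V W mV bV mW bW.
have [BV hV] := @bnd_of _ _ V bV; have [BW hW] := @bnd_of _ _ W bW.
set c := supnorm (V \- W).
have hub : has_ubound (range (fun s => `|(V \- W) s|)).
  exists (BV + BW) => _ [z _ <-]; rewrite /= (le_trans (ler_normB _ _)) //.
  exact: lerD.
have hc z : `|V z - W z| <= c by apply: (ub_le_sup hub); exists z.
have hVW z : V z <= W z + c by have := hc z; rewrite ler_norml => /andP[]; lra.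
have hWV z : W z <= V z + c by have := hc z; rewrite ler_norml => /andP[]; lra.
have piVW s : T_pi P r beta pi tau V s <= T_pi P r beta pi tau W s + beta * c.
  apply: quantile_le.
  - by exists (- (M + beta * BV)) => x hx; exact: (cdf_pi_lb b0 t0 hM hV hx).
  - exists (M + beta * BW); rewrite (cdf_pi_top b0 hM hW) lee_fin; lra.
  - by move=> x; exact: (cdf_pi_shift b0 mV mW hVW).
have piWV s : T_pi P r beta pi tau W s <= T_pi P r beta pi tau V s + beta * c.
  apply: quantile_le.
  - by exists (- (M + beta * BW)) => x hx; exact: (cdf_pi_lb b0 t0 hM hW hx).
  - exists (M + beta * BV); rewrite (cdf_pi_top b0 hM hV) lee_fin; lra.
  - by move=> x; exact: (cdf_pi_shift b0 mW mV hWV).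
have aVW s a : Q_act P r beta tau V s a <= Q_act P r beta tau W s a + beta * c.
  apply: quantile_le.
  - by exists (- (M + beta * BV)) => x hx; exact: (cdf_act_lb b0 t0 hM hV hx).
  - exists (M + beta * BW); rewrite (cdf_act_top b0 hM hW) lee_fin; lra.
  - by move=> x; exact: (cdf_act_shift b0 mV mW hVW).
have aWV s a : Q_act P r beta tau W s a <= Q_act P r beta tau V s a + beta * c.
  apply: quantile_le.
  - by exists (- (M + beta * BW)) => x hx; exact: (cdf_act_lb b0 t0 hM hW hx).
  - exists (M + beta * BV); rewrite (cdf_act_top b0 hM hV) lee_fin; lra.
  - by move=> x; exact: (cdf_act_shift b0 mW mV hWV).
have starVW s : `|T_star P r beta As tau V s - T_star P r beta As tau W s| <= beta * c.
  have [aV hAV hQV] := hmax V mV bV s; have [aW hAW hQW] := hmax W mW bW s.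
  rewrite /T_star (@sup_attained _ _ _ _ _ hAV hQV) (@sup_attained _ _ _ _ _ hAW hQW).
  have := aVW s aV; have := aWV s aW; have := hQV aW hAW; have := hQW aV hAV.
  rewrite ler_norml; move=> *; apply/andP; split; lra.
case: (pselect (exists s : S, True)) => hS; last first.
  by rewrite /c /supnorm !range_empty // !sup0 mulr0.
rewrite /supnorm; split.
  apply: sup_range_le => // s.
  have := piVW s; have := piWV s; rewrite /= ler_norml => *; apply/andP; split; lra.
apply: sup_range_le => // s; exact: (starVW s).
Qed.
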